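(* Let $V\in C^\infty(\mathbb{R}^n)$ with $\alpha_0>-\infty$, let $a\in\mathbb{R}$ satisfy $a+\alpha_0>\frac{\nu^2}4$, and let $P(x):=\begin{pmatrix}2I&\nu I\\\nu I&2\frac{\partial^2V}{\partial x^2}(x)+2aI\end{pmatrix}$. Then for all $x\in\mathbb{R}^n$ $$c_1P(x)\le\begin{pmatrix}I&0\\0&\frac{\partial^2V}{\partial x^2}(x)+(1-\alpha_0)I\end{pmatrix}\le c_2P(x),$$ with $c_1:=\dfrac{1}{a+\alpha_0+1+\sqrt{(a+\alpha_0-1)^2+\nu^2}}>0$ and $c_2:=\dfrac{a+\alpha_0+1+\sqrt{(a+\alpha_0-1)^2+\nu^2}}{4(a+\alpha_0)-\nu^2}>0$.
   Context: $\nu>0$ is a constant and $I$ the $n\times n$ identity. $\alpha(x)$ is the smallest eigenvalue of $\frac{\partial^2V}{\partial x^2}(x)$ and $\alpha_0:=\inf_{x\in\mathbb{R}^n}\alpha(x)$. For symmetric matrices, $A\ge B$ means $A-B$ is positive semi-definite. *)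

(* Defs.v *)
From HB Require Import structures.
From mathcomp Require Import all_boot all_order all_algebra.
From mathcomp Require Import all_classical all_reals all_analysis.
Set Implicit Arguments. Unset Strict Implicit. Unset Printing Implicit Defensive.
Import Order.TTheory GRing.Theory Num.Theory.
Import numFieldNormedType.Exports.
Local Open Scope classical_set_scope.
Local Open Scope ring_scope.

Section Defs.
Variables (R : realType) (n : nat).

Definition partial (i : 'I_n) (f : 'rV[R]_n -> R) : 'rV[R]_n -> R :=
  fun x => 'D_(delta_mx 0 i) f x.

Definition iter_partial (l : seq 'I_n) (f : 'rV[R]_n -> R) : 'rV[R]_n -> R :=
  foldr partial f l.

Definition smooth (f : 'rV[R]_n -> R) : Prop :=
  forall l : seq 'I_n, continuous (iter_partial l f) /\
    forall (i : 'I_n) (x : 'rV[R]_n), derivable (iter_partial l f) x (delta_mx 0 i).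

Definition hessian (V : 'rV[R]_n -> R) (x : 'rV[R]_n) : 'M[R]_n :=
  \matrix_(i, j) partial i (partial j V) x.

Definition alpha (V : 'rV[R]_n -> R) (x : 'rV[R]_n) : R :=
  inf [set a : R | eigenvalue (hessian V x) a].

Definition alpha0 (V : 'rV[R]_n -> R) : R := inf (range (alpha V)).

End Defs.

Definition psd {R : realType} {m : nat} (A : 'M[R]_m) : Prop :=
  forall v : 'cV[R]_m, 0 <= (v^T *m A *m v) 0 0.
Definition mxle {R : realType} {m : nat} (A B : 'M[R]_m) : Prop := psd (B - A).

(* Main.v *)
Require Import Defs.
From HB Require Import structures.
From mathcomp Require Import all_boot all_order all_algebra.
From mathcomp Require Import all_classical all_reals all_analysis.
From mathcomp Require Import ring lra.
Import Order.TTheory GRing.Theory Num.Theory.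
Import numFieldNormedType.Exports.
Local Open Scope classical_set_scope.
Local Open Scope ring_scope.

Section An.
Variables (R : realType) (n : nat).
Implicit Types (f : 'rV[R]_n -> R) (e p x : 'rV[R]_n).

Lemma line_deriv f e p s :
  derivable f (s *: e + p) e ->
  is_derive s 1 (fun t : R => f (t *: e + p)) ('D_e f (s *: e + p)).
Proof.
move=> df.
have E : (fun h : R => h^-1 *: (((fun t : R => f (t *: e + p)) \o shift s) (h *: 1)
             - f (s *: e + p))) =
         (fun h : R => h^-1 *: ((f \o shift (s *: e + p)) (h *: e) - f (s *: e + p))).
  apply/funext => h /=; congr (_ *: (f _ - _)).
  by rewrite [h *: 1]mulr1 scalerDl addrA.
have dg : derivable (fun t : R => f (t *: e + p)) s 1.
  by rewrite /derivable E.
apply: DeriveDef => //.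
by rewrite /derive E.
Qed.

Lemma step f e1 e2 x h : 0 < h ->
  (forall y, derivable f y e1) ->
  (forall y, derivable ('D_e1 f) y e2) ->
  exists xi, exists eta,
    [/\ 0 < xi < h, 0 < eta < h &
    f (h *: e1 + (h *: e2 + x)) - f (h *: e1 + x) - (f (h *: e2 + x) - f x) =
    h * (h * 'D_e2 ('D_e1 f) (eta *: e2 + (xi *: e1 + x)))].
Proof.
move=> h0 d1 d2.
pose phi := fun s : R => f (s *: e1 + (h *: e2 + x)) - f (s *: e1 + x).
pose dphi := fun s : R => 'D_e1 f (s *: e1 + (h *: e2 + x)) - 'D_e1 f (s *: e1 + x).
have dp : forall s : R, is_derive s 1 phi (dphi s).
  move=> s; rewrite /phi /dphi.
  change (is_derive s 1 ((fun s : R => f (s *: e1 + (h *: e2 + x))) - (fun s : R => f (s *: e1 + x)))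
    ('D_e1 f (s *: e1 + (h *: e2 + x)) - 'D_e1 f (s *: e1 + x))).
  apply: is_deriveB; apply: line_deriv; [exact: d1|exact: d1].
have [xi xiin Exi] : exists2 c, c \in `]0, h[ & phi h - phi 0 = dphi c * (h - 0).
  apply: (MVT h0).
  apply: (@derivable_within_continuous _ _ _ `[0, h]) => c _.
  by have [] := dp c.
pose psi := fun t : R => 'D_e1 f (t *: e2 + (xi *: e1 + x)).
pose dpsi := fun t : R => 'D_e2 ('D_e1 f) (t *: e2 + (xi *: e1 + x)).
have dq : forall t : R, is_derive t 1 psi (dpsi t).
  move=> t; exact: line_deriv.
have [eta etain Eeta] : exists2 c, c \in `]0, h[ & psi h - psi 0 = dpsi c * (h - 0).
  apply: (MVT h0).
  apply: (@derivable_within_continuous _ _ _ `[0, h]) => c _.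
  by have [] := dq c.
exists xi, eta; split.
- by move: xiin; rewrite in_itv.
- by move: etain; rewrite in_itv.
have -> : f (h *: e1 + (h *: e2 + x)) - f (h *: e1 + x) - (f (h *: e2 + x) - f x)
   = phi h - phi 0 by rewrite /phi !scale0r !add0r.
rewrite Exi subr0 /dphi.
have -> : 'D_e1 f (xi *: e1 + (h *: e2 + x)) - 'D_e1 f (xi *: e1 + x) = psi h - psi 0.
  by rewrite /psi scale0r add0r addrCA.
by rewrite Eeta subr0 /dpsi mulrC [_ * h]mulrC.
Qed.

Lemma ball_small e1 e2 x (h a b d : R) :
  0 < a < h -> 0 < b < h -> h * (`|e1| + `|e2| + 1) <= d ->
  `|x - (a *: e1 + (b *: e2 + x))| < d.
Proof.
move=> /andP[a0 ah] /andP[b0 bh] hd.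
have -> : x - (a *: e1 + (b *: e2 + x)) = - (a *: e1 + b *: e2).
  by rewrite addrA opprD addrCA subrr addr0.
rewrite normrN (le_lt_trans (ler_normD _ _)) //.
rewrite !normrZ (gtr0_norm a0) (gtr0_norm b0).
apply: (lt_le_trans _ hd).
have n1 := normr_ge0 e1; have n2 := normr_ge0 e2.
have h0 : 0 < h by apply: lt_trans ah.
rewrite mulrDr mulrDr mulr1.
have : a * `|e1| <= h * `|e1| by rewrite ler_wpM2r // ltW.
have : b * `|e2| <= h * `|e2| by rewrite ler_wpM2r // ltW.
move=> H1 H2.
apply: (le_lt_trans (lerD H2 H1)); by rewrite ltrDl.
Qed.


Lemma swap4 (A B C D : R) : A - B - (C - D) = A - C - (B - D).
Proof. by rewrite !opprB !addrA [A - B + D]addrAC [A - C + D]addrAC addrAC. Qed.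

Lemma schwarz f e1 e2 x :
  (forall y, derivable f y e1) -> (forall y, derivable f y e2) ->
  (forall y, derivable ('D_e1 f) y e2) -> (forall y, derivable ('D_e2 f) y e1) ->
  continuous ('D_e2 ('D_e1 f)) -> continuous ('D_e1 ('D_e2 f)) ->
  'D_e2 ('D_e1 f) x = 'D_e1 ('D_e2 f) x.
Proof.
move=> d1 d2 d12 d21 c1 c2.
apply/eqP; rewrite -subr_eq0 -normr_le0.
case: (lerP `|'D_e2 ('D_e1 f) x - 'D_e1 ('D_e2 f) x| 0) => // dpos.
set d := `|'D_e2 ('D_e1 f) x - 'D_e1 ('D_e2 f) x| in dpos *.
have epos : 0 < d / 2 by rewrite divr_gt0.
have /cvgrPdist_lt /(_ _ epos) /nbhs_ballP [r1 r1pos B1] := c1 x.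
have /cvgrPdist_lt /(_ _ epos) /nbhs_ballP [r2 r2pos B2] := c2 x.
set N := `|e1| + `|e2| + 1.
have Npos : 0 < N by rewrite ltr_wpDl // addr_ge0.
set h := Num.min r1 r2 / N.
have h0 : 0 < h by rewrite divr_gt0 // lt_min r1pos r2pos.
have hN : h * N = Num.min r1 r2 by rewrite /h divfK // gt_eqF.
have [xi [eta [xiin etain E1]]] := step f e1 e2 x h h0 d1 d12.
have [xi' [eta' [xiin' etain' E2]]] := step f e2 e1 x h h0 d2 d21.
have E : f (h *: e1 + (h *: e2 + x)) - f (h *: e1 + x) - (f (h *: e2 + x) - f x) = f (h *: e2 + (h *: e1 + x)) - f (h *: e2 + x) - (f (h *: e1 + x) - f x).
  rewrite [h *: e1 + (h *: e2 + x)]addrCA.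
  exact: swap4.
move: E; rewrite E1 E2 => /(mulfI (negbT (gt_eqF h0))) /(mulfI (negbT (gt_eqF h0))) EF.
have hr1 : h * (`|e2| + `|e1| + 1) <= r1 by rewrite [`|e2| + _]addrC hN ge_min lexx.
have hr2 : h * N <= r2 by rewrite hN ge_min lexx orbT.
have b1 : ball x r1 (eta *: e2 + (xi *: e1 + x)).
  by rewrite -ball_normE /ball_ /=; exact: (ball_small e2 e1 x h eta xi r1 etain xiin hr1).
have b2 : ball x r2 (eta' *: e1 + (xi' *: e2 + x)).
  by rewrite -ball_normE /ball_ /=; exact: (ball_small e1 e2 x h eta' xi' r2 etain' xiin' hr2).
move/B1: b1 => b1; move/B2: b2 => b2.
move: b1 b2; rewrite EF => b1 b2.
rewrite distrC in b2.
have H := ler_distD ('D_e1 ('D_e2 f) (eta' *: e1 + (xi' *: e2 + x))) ('D_e2 ('D_e1 f) x) ('D_e1 ('D_e2 f) x).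
have := le_lt_trans H (ltrD b1 b2).
by rewrite -splitr ltxx.
Qed.
End An.

Section LA.
Variables (R : realType) (n : nat).
Implicit Types (A B : 'M[R]_n) (u v w : 'cV[R]_n).

Definition qf A v := (v^T *m A *m v) 0 0.
Definition nn v := (v^T *m v) 0 0.

Lemma nnE v : nn v = \sum_i v i 0 ^+ 2.
Proof. by rewrite /nn mxE; apply: eq_bigr => i _; rewrite mxE expr2. Qed.

Lemma qfE A v : qf A v = \sum_i \sum_j v i 0 * A i j * v j 0.
Proof.
rewrite /qf mxE exchange_big /=; apply: eq_bigr => j _.
rewrite mxE mulr_suml; apply: eq_bigr => i _; by rewrite !mxE.
Qed.

Lemma nn_ge0 v : 0 <= nn v.
Proof. by rewrite nnE sumr_ge0 // => i _; rewrite sqr_ge0. Qed.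

Lemma coord_le v i : v i 0 ^+ 2 <= nn v.
Proof.
rewrite nnE (bigD1 i) //= lerDl sumr_ge0 // => j _; exact: sqr_ge0.
Qed.

Lemma nn_eq0 v : nn v = 0 -> v = 0.
Proof.
move=> h; apply/matrixP => i j; rewrite ord1 mxE.
have := coord_le v i; rewrite h => H.
have : v i 0 ^+ 2 = 0 by apply/le_anti; rewrite H sqr_ge0.
by move/eqP; rewrite sqrf_eq0 => /eqP.
Qed.

Definition Cst A := 1 + \sum_i \sum_j `|A i j|.

Lemma Cst_gt0 A : 0 < Cst A.
Proof. by rewrite /Cst ltr_pwDl // sumr_ge0 // => i _; rewrite sumr_ge0. Qed.

Lemma qf_le A v : qf A v <= Cst A * nn v.
Proof.
rewrite qfE /Cst mulrDl mul1r.
suff H : \sum_i \sum_j v i 0 * A i j * v j 0 <= (\sum_i \sum_j `|A i j|) * nn v.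
  have := nn_ge0 v; lra.
rewrite mulr_suml; apply: ler_sum => i _; rewrite mulr_suml; apply: ler_sum => j _.
have hi := coord_le v i; have hj := coord_le v j.
have ha := normr_ge0 (A i j).
have : v i 0 * A i j * v j 0 <= `|A i j| * (`|v i 0| * `|v j 0|).
  apply: (le_trans (ler_norm _)).
  by rewrite !normrM mulrAC mulrC.
move/le_trans; apply; apply: ler_wpM2l => //.
have : `|v i 0| * `|v j 0| <= (v i 0 ^+ 2 + v j 0 ^+ 2) / 2.
  have ea : `|v i 0| ^+ 2 = v i 0 ^+ 2 by rewrite real_normK // num_real.
  have eb : `|v j 0| ^+ 2 = v j 0 ^+ 2 by rewrite real_normK // num_real.
  rewrite -ea -eb.
  set a := `|v i 0|; set b := `|v j 0|.
  have : 0 <= (a - b) ^+ 2 by rewrite sqr_ge0.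
  nra.
move/le_trans; apply; lra.
Qed.

Lemma e00D (X Y : 'M[R]_1) : (X + Y) 0 0 = X 0 0 + Y 0 0. Proof. by rewrite !mxE. Qed.
Lemma e00B (X Y : 'M[R]_1) : (X - Y) 0 0 = X 0 0 - Y 0 0. Proof. by rewrite !mxE. Qed.
Lemma e00Z a (X : 'M[R]_1) : (a *: X) 0 0 = a * X 0 0. Proof. by rewrite !mxE. Qed.

Lemma qf_expand A u (t : R) : A^T = A ->
  qf A (u - t *: (A *m u)) = qf A u - 2 * t * nn (A *m u) + t ^+ 2 * qf A (A *m u).
Proof.
move=> hA; set w := A *m u.
have wT : w^T = u^T *m A by rewrite /w trmx_mul hA.
have c1 : u^T *m A *m w = w^T *m w by rewrite wT.
have c2 : w^T *m A *m u = w^T *m w by rewrite wT /w -!mulmxA.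
have tr : (u - t *: w)^T = u^T - t *: w^T by rewrite linearB linearZ.
rewrite /qf /nn tr !mulmxBl !mulmxBr -!scalemxAl -!scalemxAr.
rewrite c1 c2 !e00B !e00Z.
ring.
Qed.

Lemma nn_mul B w : nn (B *m w) = qf (B^T *m B) w.
Proof. by rewrite /nn /qf trmx_mul !mulmxA. Qed.

Lemma coercive A : A^T = A -> (forall u, 0 <= qf A u) -> A \in unitmx ->
  exists2 eps, 0 < eps & forall u, eps * nn u <= qf A u.
Proof.
move=> hA psd unitA.
set C := Cst A; set K := Cst ((invmx A)^T *m invmx A).
have C0 : 0 < C := Cst_gt0 A.
have K0 : 0 < K := Cst_gt0 _.
exists (C * K)^-1; first by rewrite invr_gt0 mulr_gt0.
move=> u.
have h1 : nn (A *m u) <= C * qf A u.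
  have := psd (u - C^-1 *: (A *m u)); rewrite qf_expand //.
  have := qf_le A (A *m u); rewrite -/C => hq.
  have := nn_ge0 (A *m u).
  set N := nn (A *m u); set Q := qf A (A *m u); set q := qf A u => N0 hp.
  have hCi : C * C^-1 = 1 by rewrite mulfV // gt_eqF.
  have Ci0 : 0 < C^-1 by rewrite invr_gt0.
  have e1 : C^-1 ^+ 2 * (C * N) = C^-1 * N.
    by rewrite expr2 -mulrA (mulrA C^-1 C) mulVf ?gt_eqF // mul1r.
  have : C^-1 ^+ 2 * Q <= C^-1 ^+ 2 * (C * N) by rewrite ler_wpM2l // sqr_ge0.
  rewrite e1 => hQ.
  have hh : 0 <= q - C^-1 * N by lra.
  have := mulr_ge0 (ltW C0) hh.
  rewrite mulrBr mulrA hCi mul1r.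
  lra.
have h2 : nn u <= K * nn (A *m u).
  have {1}-> : u = invmx A *m (A *m u) by rewrite mulKmx.
  rewrite [nn (invmx A *m _)]nn_mul; exact: qf_le.
rewrite invfM -mulrA ler_pdivrMl //.
rewrite ler_pdivrMl //.
nra.
Qed.

Lemma qf0 A : qf A 0 = 0.
Proof. by rewrite /qf mulmx0 mxE. Qed.
Lemma nn0 : nn 0 = 0.
Proof. by rewrite /nn mulmx0 mxE. Qed.

Lemma nn_gt0 v : v != 0 -> 0 < nn v.
Proof.
move=> vn0; rewrite lt_neqAle nn_ge0 andbT; apply/eqP => h.
by move/eqP: vn0; apply; apply: nn_eq0.
Qed.

Lemma qfN A u : qf (- A) u = - qf A u.
Proof. by rewrite /qf mulmxN mulNmx mxE. Qed.

Lemma qf_shift A (m : R) u : qf (A - m%:M) u = qf A u - m * nn u.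
Proof.
by rewrite /qf mulmxBr mulmxBl mul_mx_scalar -scalemxAl e00B e00Z.
Qed.

Lemma min_eig H v : H^T = H -> v != 0 ->
  exists m, eigenvalue H m /\ forall w, m * nn w <= qf H w.
Proof.
move=> hH vn0.
pose S := [set r : R | exists2 u, u != 0 & r = qf H u / nn u].
have S0 : S !=set0 by exists (qf H v / nn v); exists v.
have Slb : has_lbound S.
  exists (- Cst (- H)) => r [u un0 ->].
  rewrite ler_pdivlMr ?nn_gt0 //.
  have := qf_le (- H) u; rewrite qfN mulNr; lra.
set m := inf S.
have hm : forall w, m * nn w <= qf H w.
  move=> w; have [->|wn0] := eqVneq w 0; first by rewrite nn0 qf0 mulr0.
  rewrite -ler_pdivlMr ?nn_gt0 //; apply: ge_inf => //; by exists w.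
exists m; split => //.
apply/eigenvalueP.
have : \det (H - m%:M) == 0.
  rewrite -[_ == 0]negbK -unitfE -unitmxE; apply/negP => hu.
  have hT : (H - m%:M)^T = H - m%:M by rewrite linearB /= tr_scalar_mx hH.
  have hp : forall u, 0 <= qf (H - m%:M) u by move=> u; rewrite qf_shift subr_ge0.
  have [eps eps0 heps] := coercive (H - m%:M) hT hp hu.
  have : m + eps <= m.
    apply: lb_le_inf => // r [u un0 ->].
    rewrite ler_pdivlMr ?nn_gt0 //.
    have := heps u; rewrite qf_shift; lra.
  lra.
case/det0P => w wn0; rewrite mulmxBr mul_mx_scalar => /eqP; rewrite subr_eq0 => /eqP hw.
by exists w.
Qed.
End LA.
Arguments qf {R n}. Arguments nn {R n}. Arguments nn0 {R n}. Arguments qf0 {R n}.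
Arguments min_eig {R n}. Arguments nn_gt0 {R n}. Arguments nn_ge0 {R n}. Arguments e00Z {R}.

Section Al.
Variables (R : realType) (n : nat).

Lemma hess_sym (V : 'rV[R]_n -> R) x : smooth V -> (hessian V x)^T = hessian V x.
Proof.
move=> sV; apply/matrixP => i j; rewrite !mxE.
have [_ d0] := sV [::].
have [_ dj] := sV [:: j].
have [_ di] := sV [:: i].
have [cij _] := sV [:: i; j].
have [cji _] := sV [:: j; i].
symmetry.
exact: (@schwarz R n V (delta_mx 0 j) (delta_mx 0 i) x (d0 j) (d0 i) (dj i) (di j) cij cji).
Qed.

Lemma alpha_bound (V : 'rV[R]_n -> R) x v : smooth V ->
  (exists m : R, forall x, m <= alpha V x) ->
  alpha0 V * nn v <= qf (hessian V x) v.
Proof.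
move=> sV [lb hlb].
have [->|vn0] := eqVneq v 0; first by rewrite nn0 qf0 mulr0.
have [m [em hm]] := min_eig _ _ (hess_sym V x sV) vn0.
have mlb : lbound [set a : R | eigenvalue (hessian V x) a] m.
  move=> l /eigenvalueP [w hw wn0].
  have wTn0 : w^T != 0 by rewrite trmx_eq0.
  have := hm w^T; rewrite /qf trmxK hw -scalemxAl e00Z.
  rewrite -/(nn w^T) => h.
  rewrite -(ler_pM2r (nn_gt0 _ wTn0)); by move: h; rewrite /nn trmxK.
have am : alpha V x = m.
  apply/le_anti; apply/andP; split.
  - by apply: ge_inf => //; exists m.
  - by apply: lb_le_inf => //; exists m.
have a0 : alpha0 V <= alpha V x.
  have hlbR : has_lbound (range (alpha V)) by exists lb => _ [y _ <-]; exact: hlb.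
  by apply: (ge_inf hlbR); exists x.
apply: le_trans (hm v); rewrite -am; apply: ler_wpM2r => //; exact: nn_ge0.
Qed.
End Al.

Section Sc.
Variable R : realFieldType.

Lemma quad (al ga be X Y p : R) : 0 <= al -> 0 <= ga -> be ^+ 2 <= al * ga ->
  0 <= X -> 0 <= Y -> p ^+ 2 <= X * Y -> 2 * be * p <= al * X + ga * Y.
Proof.
move=> a0 g0 hb X0 Y0 hp.
set S := al * X + ga * Y.
have S0 : 0 <= S by rewrite /S addr_ge0 // mulr_ge0.
have h1 : be ^+ 2 * p ^+ 2 <= al * ga * (X * Y).
  apply: le_trans (ler_wpM2r (sqr_ge0 p) hb) _.
  by apply: ler_wpM2l => //; rewrite mulr_ge0.
have h2 : 0 <= (al * X - ga * Y) ^+ 2 by rewrite sqr_ge0.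
have h3 : (2 * be * p) ^+ 2 <= S ^+ 2.
  have -> : S ^+ 2 = (al * X - ga * Y) ^+ 2 + 4 * (al * ga * (X * Y)) by rewrite /S; ring.
  have -> : (2 * be * p) ^+ 2 = 4 * (be ^+ 2 * p ^+ 2) by ring.
  lra.
set z := 2 * be * p in h3 *.
nra.
Qed.

Lemma scal (b s nu X Y p t : R) : 0 < nu -> nu ^+ 2 / 4 < b -> 0 <= s ->
  s ^+ 2 = (b - 1) ^+ 2 + nu ^+ 2 -> 0 <= X -> 0 <= Y -> p ^+ 2 <= X * Y -> 0 <= t ->
  0 <= (X + Y + t) - (b + 1 + s)^-1 * (2 * X + 2 * nu * p + 2 * b * Y + 2 * t) /\ 0 <= (b + 1 + s) / (4 * b - nu ^+ 2) * (2 * X + 2 * nu * p + 2 * b * Y + 2 * t) - (X + Y + t).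
Proof.
move=> nu0 hb s0 hs X0 Y0 hp t0.
set L := b + 1 + s.
have b0 : 0 < b by apply: le_lt_trans hb; rewrite mulr_ge0 // ?sqr_ge0 // invr_ge0.
have L0 : 0 < L by rewrite /L; lra.
have D0 : 0 < 4 * b - nu ^+ 2 by move: hb; rewrite ltr_pdivrMr //; lra.
have sb1 : b - 1 <= s.
  have [le|lt] := lerP (b - 1) 0; first lra.
  rewrite -(ler_sqr (x:=b-1) (y:=s)) ?nnegrE ?(ltW lt) //.
  by rewrite hs lerDl sqr_ge0.
have sb2 : 1 - b <= s.
  have [le|lt] := lerP (1 - b) 0; first lra.
  rewrite -(ler_sqr (x:=1-b) (y:=s)) ?nnegrE ?(ltW lt) //.
  by rewrite hs -sqrrN opprB lerDl sqr_ge0.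
split.
- have key : 2 * nu * p <= (L - 2) * X + (L - 2 * b) * Y.
    apply: quad; rewrite /L; try lra.
  rewrite -(pmulr_rge0 _ L0) mulrBr mulrA mulfV ?gt_eqF // mul1r.
  have tt : 0 <= (L - 2) * t by apply: mulr_ge0 => //; rewrite /L; lra.
  move: key tt; rewrite /L; lra.
- set D := 4 * b - nu ^+ 2.
  have key : 2 * (- (L * nu)) * p <= (2 * L - D) * X + (2 * b * L - D) * Y.
    apply: quad => //; rewrite /L /D; try nra.
  have -> : L / D * (2 * X + 2 * nu * p + 2 * b * Y + 2 * t) - (X + Y + t) =
     D^-1 * (L * (2 * X + 2 * nu * p + 2 * b * Y + 2 * t) - D * (X + Y + t)).
    by field; rewrite gt_eqF.
  apply: mulr_ge0; first by rewrite invr_ge0 ltW.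
  have := sqr_ge0 nu => nn0.
  have tt : 0 <= (2 * L - D) * t by apply: mulr_ge0 => //; rewrite /L /D; lra.
  move: key tt; rewrite /L /D; lra.
Qed.
End Sc.


Section LB.
Variable R : realType.

Definition bf {m} (A : 'M[R]_m) (x y : 'cV[R]_m) := (x^T *m A *m y) 0 0.

Lemma qf_blk m (A B C D : 'M[R]_m) (x y : 'cV[R]_m) :
  qf (block_mx A B C D) (col_mx x y) = qf A x + bf B x y + bf C y x + qf D y.
Proof.
rewrite /qf /bf tr_col_mx mul_row_block mul_row_col !mulmxDl !e00D.
by rewrite addrACA addrA.
Qed.

Lemma qfD m (A B : 'M[R]_m) v : qf (A + B) v = qf A v + qf B v.
Proof. by rewrite /qf mulmxDr mulmxDl e00D. Qed.
Lemma qfZ m c (A : 'M[R]_m) v : qf (c *: A) v = c * qf A v.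
Proof. by rewrite /qf -scalemxAr -scalemxAl e00Z. Qed.
Lemma qfB m (A B : 'M[R]_m) v : qf (A - B) v = qf A v - qf B v.
Proof. by rewrite /qf mulmxBr mulmxBl e00B. Qed.
Lemma qf_scal m c v : qf (c%:M : 'M[R]_m) v = c * nn v.
Proof. by rewrite /qf mul_mx_scalar -scalemxAl e00Z. Qed.
Lemma bf_scal m c (x y : 'cV[R]_m) : bf (c%:M) x y = c * (x^T *m y) 0 0.
Proof. by rewrite /bf mul_mx_scalar -scalemxAl e00Z. Qed.
Lemma bf0 m (x y : 'cV[R]_m) : bf 0 x y = 0.
Proof. by rewrite /bf mulmx0 mul0mx mxE. Qed.
Lemma dotC m (x y : 'cV[R]_m) : (y^T *m x) 0 0 = (x^T *m y) 0 0.
Proof. by rewrite -[y^T *m x]trmxK trmx_mul trmxK mxE. Qed.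

Lemma nn_comb m a b (x y : 'cV[R]_m) :
  nn (a *: x + b *: y) = a ^+ 2 * nn x + 2 * a * b * (x^T *m y) 0 0 + b ^+ 2 * nn y.
Proof.
have tr : (a *: x + b *: y)^T = a *: x^T + b *: y^T by rewrite linearD !linearZ.
rewrite /nn tr mulmxDl !mulmxDr -!scalemxAl -!scalemxAr !e00D !e00Z.
rewrite dotC; ring.
Qed.

Lemma cs m (x y : 'cV[R]_m) : ((x^T *m y) 0 0) ^+ 2 <= nn x * nn y.
Proof.
have [->|yn0] := eqVneq y 0.
  by rewrite mulmx0 mxE nn0 mulr0 expr2 mulr0.
have Y0 := nn_gt0 _ yn0.
have := nn_ge0 (nn y *: x + (- (x^T *m y) 0 0) *: y).
rewrite nn_comb.
set p := (x^T *m y) 0 0; set X := nn x; set Y := nn y => h.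
have : 0 <= Y * (X * Y - p ^+ 2) by apply: (le_trans h); rewrite le_eqVlt; apply/orP; left; apply/eqP; ring.
by rewrite pmulr_rge0 // subr_ge0.
Qed.
End LB.

Theorem lemma6p1 (R : realType) (n : nat) (nu : R) (V : 'rV[R]_n -> R) (a : R) :
  0 < nu ->
  smooth V ->
  (exists m : R, forall x, m <= alpha V x) ->
  a + alpha0 V > nu ^+ 2 / 4 ->
  let c1 := (a + alpha0 V + 1 + Num.sqrt ((a + alpha0 V - 1) ^+ 2 + nu ^+ 2))^-1 in
  let c2 := (a + alpha0 V + 1 + Num.sqrt ((a + alpha0 V - 1) ^+ 2 + nu ^+ 2))
            / (4 * (a + alpha0 V) - nu ^+ 2) in
  let P := fun x => block_mx (2%:M : 'M[R]_n) nu%:M nu%:M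
                     (2 *: hessian V x + (2 * a)%:M) in
  let Q := fun x => block_mx (1%:M : 'M[R]_n) 0 0
                     (hessian V x + (1 - alpha0 V)%:M) in
  0 < c1 /\ 0 < c2 /\
  forall x : 'rV[R]_n, mxle (c1 *: P x) (Q x) /\ mxle (Q x) (c2 *: P x).
Proof.
move=> nu0 sV hlb hb c1 c2 P Q.
set b := a + alpha0 V in hb c1 c2 *.
set s := Num.sqrt ((b - 1) ^+ 2 + nu ^+ 2) in c1 c2 *.
have s0 : 0 <= s by rewrite sqrtr_ge0.
have hs : s ^+ 2 = (b - 1) ^+ 2 + nu ^+ 2.
  by rewrite sqr_sqrtr // addr_ge0 // sqr_ge0.
have b0 : 0 < b by apply: le_lt_trans hb; rewrite mulr_ge0 // ?sqr_ge0 // invr_ge0.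
have L0 : 0 < b + 1 + s by lra.
have D0 : 0 < 4 * b - nu ^+ 2 by move: hb; rewrite ltr_pdivrMr //; lra.
split; first by rewrite /c1 invr_gt0.
split; first by rewrite /c2 divr_gt0.
move=> x.
have key : forall v : 'cV[R]_(n + n),
   exists X Y p t, [/\ 0 <= X, 0 <= Y, p ^+ 2 <= X * Y,
     0 <= t & qf (Q x) v = X + Y + t /\
     qf (P x) v = 2 * X + 2 * nu * p + 2 * b * Y + 2 * t].
  move=> v; rewrite -(vsubmxK v).
  set u := usubmx v; set w := dsubmx v.
  exists (nn u), (nn w), ((u^T *m w) 0 0), (qf (hessian V x) w - alpha0 V * nn w).
  split.
  - exact: nn_ge0.
  - exact: nn_ge0.
  - exact: cs.
  - by rewrite subr_ge0; apply: alpha_bound.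
  split.
  - rewrite /Q qf_blk bf0 bf0 qfD !qf_scal /b; ring.
  - rewrite /P qf_blk qfD qfZ !qf_scal !bf_scal dotC /b; ring.
split => v; rewrite /mxle /psd.
- change (0 <= qf (Q x - c1 *: P x) v).
  have [X [Y [p [t [X0 Y0 hp t0 [hQ hP]]]]]] := key v.
  rewrite qfB qfZ hQ hP.
  by have [] := @scal R b s nu X Y p t nu0 hb s0 hs X0 Y0 hp t0.
- change (0 <= qf (c2 *: P x - Q x) v).
  have [X [Y [p [t [X0 Y0 hp t0 [hQ hP]]]]]] := key v.
  rewrite qfB qfZ hQ hP.
  by have [] := @scal R b s nu X Y p t nu0 hb s0 hs X0 Y0 hp t0.
Qed.
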